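(* Consider the weighted median search process described in the context, with initial weights satisfying $\omega_0(V)=1$. For every $\tau\ge 0$ and any sequence of answers, $$\omega_\tau(V\setminus\{x_\tau\})\le\frac{1}{2^\tau},$$ where $x_\tau$ is a heaviest vertex with respect to $\omega_\tau$ (i.e., $\omega_\tau(x_\tau)\ge\omega_\tau(u)$ for all $u\in V$, ties broken arbitrarily).
   Context: $G=(V,E)$ is a connected undirected unweighted graph, $0<p<\frac12$, $d(u,v)$ is the graph distance. Positive weights $\omega_t(v)$ are maintained, with $\omega(U)=\sum_{u\in U}\omega(u)$; a vertex $v$ is heavy (w.r.t. $\omega$) if $\omega(v)/\omega(V)\ge\frac12$. A median w.r.t. $\omega$ is a vertex $q$ minimizing $\sum_{u\in V}d(u,q)\omega(u)$. In step $t$ the process queries a median $q$ w.r.t. $\omega_{t-1}$, where a heavy vertex is chosen whenever one exists (a heavy vertex is always a median). The answer is either ''yes'' or a neighbor $u$ of $q$ (a ''no-answer''). A vertex $v$ is compatible with the answer if: for a yes-answer, $v=q$; for a no-answer $u$ with $q$ not heavy, $u$ lies on a shortest $q$–$v$ path; for a no-answer with $q$ heavy, $v\neq q$. Bayesian update: $\omega_t(v)=(1-p)\omega_{t-1}(v)$ if $v$ is compatible and $\omega_t(v)=p\,\omega_{t-1}(v)$ otherwise. *)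

(* Defs.v *)
From mathcomp Require Import all_boot all_order all_algebra.
Set Implicit Arguments. Unset Strict Implicit. Unset Printing Implicit Defensive.
Import Order.TTheory GRing.Theory Num.Theory.
Local Open Scope ring_scope.

Section Graph.
Variable T : finType.
Variable e : rel T.

Fixpoint gball (n : nat) (u : T) : {set T} :=
  if n is n'.+1 then gball n' u :|: [set y | [exists x in gball n' u, e x y]]
  else [set u].

(* graph distance: least n with v within n steps of u (#|T| if unreachable) *)
Definition gdist (u v : T) : nat := find (fun n => v \in gball n u) (iota 0 #|T|).

Definition connected_graph : Prop := forall u v, connect e u v.
End Graph.

Section Process.
Variable R : realFieldType.
Variable T : finType.
Variable e : rel T.

Definition wtot (w : T -> R) : R := \sum_(v : T) w v.

Definition heavy (w : T -> R) (v : T) : bool := w v / wtot w >= 1 / 2.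

Definition median (w : T -> R) (q : T) : Prop :=
  forall y : T, \sum_(u : T) (gdist e u q)%:R * w u <= \sum_(u : T) (gdist e u y)%:R * w u.

(* answer: None = "yes", Some u = no-answer pointing to neighbour u *)
Definition compatible (w : T -> R) (q : T) (a : option T) (v : T) : bool :=
  match a with
  | None => v == q
  | Some u => if heavy w q then v != q
              else gdist e q v == (gdist e u v).+1
  end.

(* one step: from weights w (= omega_{t-1}) query q, answer a, produce w' (= omega_t) *)
Definition valid_step (p : R) (w : T -> R) (q : T) (a : option T) (w' : T -> R) : Prop :=
  median w q /\
  ((exists v, heavy w v) -> heavy w q) /\
  (forall u, a = Some u -> e q u) /\
  (forall v, w' v = (if compatible w q a v then 1 - p else p) * w v).
End Process.

(* Main.v *)
Require Import Defs.
From mathcomp Require Import all_boot all_order all_algebra.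
From mathcomp Require Import lra.
Import Order.TTheory GRing.Theory Num.Theory.
Local Open Scope ring_scope.
Section G.
Variable T : finType.
Variable e : rel T.

Lemma gball_S n u v : v \in gball e n u -> v \in gball e n.+1 u.
Proof. by move=> h; rewrite /= in_setU h. Qed.

Lemma gball_comp m n u x v : x \in gball e n u -> v \in gball e m x ->
  v \in gball e (n + m) u.
Proof.
elim: m v => [|m IH] v hx /=.
  by rewrite in_set1 => /eqP ->; rewrite addn0.
rewrite addnS /= in_setU => /orP [h|].
  by rewrite in_setU (IH _ hx h).
rewrite inE => /existsP [y /andP [hy hyv]].
rewrite in_setU; apply/orP; right; rewrite inE; apply/existsP; exists y.
by rewrite (IH _ hx hy).
Qed.

Arguments gball_S {n u v}.
Arguments gball_comp {m n u x v}.

Lemma gball_sym (es : symmetric e) n u v : v \in gball e n u -> u \in gball e n v.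
Proof.
elim: n u v => [|n IH] u v /=.
  by rewrite !in_set1 => /eqP ->.
rewrite in_setU => /orP [h|].
  by apply: gball_S; apply: IH.
rewrite inE => /existsP [x /andP [hx hxv]].
have h1 : x \in gball e 1 v.
  rewrite /= in_setU; apply/orP; right; rewrite inE; apply/existsP; exists v.
  by rewrite in_set1 eqxx es.
have := gball_comp h1 (IH _ _ hx).
by rewrite add1n.
Qed.

Lemma gdist_sym (es : symmetric e) u v : gdist e u v = gdist e v u.
Proof.
rewrite /gdist; apply: eq_find => n; apply/idP/idP; exact: gball_sym.
Qed.

Lemma gdist_edge q u v : e q u -> (gdist e v u <= (gdist e v q).+1)%N.
Proof.
move=> equ; rewrite /gdist.
set n := find (fun k => q \in gball e k v) _.
have hs := find_size (fun n => u \in gball e n v) (iota 0 #|T|).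
rewrite size_iota in hs.
case: (ltnP n #|T|) => hn; last exact: leq_trans hs (leq_trans hn (leqnSn _)).
have hq : q \in gball e n v.
  have hh : has (fun n => q \in gball e n v) (iota 0 #|T|) by rewrite has_find size_iota.
  have := nth_find 0%N hh.
  by rewrite nth_iota.
have hu : u \in gball e 1 q.
  rewrite /= in_setU; apply/orP; right; rewrite inE; apply/existsP; exists q.
  by rewrite in_set1 eqxx equ.
have hv := gball_comp hq hu; rewrite addn1 in hv.
case: (ltnP n.+1 #|T|) => hn1; last by apply: leq_trans hs hn1.
rewrite leqNgt; apply/negP => hlt.
have := before_find 0%N hlt.
by rewrite nth_iota // add0n hv.
Qed.

End G.

Definition Psi {R : realFieldType} (W M : R) : R :=
  if W <= 2 * M then 4 * (W - M) * M else W ^+ 2.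

Lemma psi_G {R : realFieldType} {W M z : R} : z <= M -> W <= 2 * z ->
  Psi W M <= 4 * (W - z) * z.
Proof.
move=> h1 h2; rewrite /Psi; have -> : W <= 2 * M by lra.
have : 0 <= (M - z) * (M + z - W) by apply: mulr_ge0; lra.
nra.
Qed.

Lemma psi_H {R : realFieldType} (W M : R) : Psi W M <= W ^+ 2.
Proof. rewrite /Psi; case: ifP => _ //; have := sqr_ge0 (W - 2 * M); nra. Qed.

Theorem lemma5 (R : realFieldType) (T : finType) (e : rel T)
  (e_sym : symmetric e) (e_irr : irreflexive e) (e_conn : connected_graph e)
  (p : R) (hp0 : 0 < p) (hp1 : p < 1 / 2)
  (w : nat -> T -> R) (q : nat -> T) (a : nat -> option T)
  (w0_pos : forall v, 0 < w 0%N v) (w0_tot : wtot (w 0%N) = 1)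
  (steps : forall t : nat, valid_step e p (w t) (q t) (a t) (w t.+1)) :
  forall (tau : nat) (x : T), (forall u, w tau u <= w tau x) ->
    \sum_(v | v != x) w tau v <= 1 / 2 ^+ tau.
Proof.
have wpos : forall t v, 0 < w t v.
  elim=> [|t IH] v //.
  have [_ [_ [_ hw]]] := steps t.
  rewrite hw; apply: mulr_gt0 => //; case: ifP => _ //; lra.
have Wsplit : forall t v, wtot (w t) = w t v + \sum_(u | u != v) w t u.
  by move=> t v; rewrite /wtot (bigD1 v).
have Dge0 : forall t v, 0 <= \sum_(u | u != v) w t u.
  by move=> t v; apply: sumr_ge0 => u _; apply: ltW.
have Wpos : forall (t : nat) (v : T), 0 < wtot (w t).
  move=> t v; rewrite (Wsplit t v); have := wpos t v; have := Dge0 t v; lra.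
have heavyE : forall t v, heavy (w t) v = (wtot (w t) <= 2 * w t v).
  move=> t v; rewrite /heavy ler_pdivlMr; last exact: (Wpos t v).
  by apply/idP/idP => h; lra.
have exmax : forall t (y : T), exists x, forall u, w t u <= w t x.
  move=> t y; case: (@arg_maxP _ R T y predT (w t) isT) => x _ H.
  by exists x => u; apply: H.
have inv : forall t x, (forall u, w t u <= w t x) ->
    Psi (wtot (w t)) (w t x) * (2 ^+ t * 2 ^+ t) <= 1.
  elim=> [|t IH] y hy.
    rewrite w0_tot expr0 !mulr1 /Psi; case: ifP => _; last by rewrite expr1n.
    have := sqr_ge0 (1 - 2 * w 0%N y); nra.
  have [x hx] := exmax t y.
  have IHx := IH x hx.
  have P0 : 0 < (2 : R) ^+ t by apply: exprn_gt0; lra.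
  suff key : Psi (wtot (w t.+1)) (w t.+1 y) * 4 <= Psi (wtot (w t)) (w t x).
    rewrite exprS; nra.
  have [hmed [hheavy [hedge hw']]] := steps t.
  set W := wtot (w t); set M := w t x.
  have W'E : wtot (w t.+1) =
      \sum_v (if compatible e (w t) (q t) (a t) v then 1 - p else p) * w t v.
    by rewrite /wtot; apply: eq_bigr => v _; exact: hw'.
  have hM' : forall v, w t.+1 v <= w t.+1 y by [].
  set m := w t (q t).
  set Dq := \sum_(u | u != q t) w t u.
  have WE : W = m + Dq by exact: Wsplit.
  have Dq0 : 0 <= Dq by exact: Dge0.
  have m0 : 0 < m by exact: wpos.
  have M0 : 0 < M by exact: wpos.
  have mM : m <= M by exact: hx.
  case: (boolP (W <= 2 * M)) => hWM.
  - have hpsi : Psi W M = 4 * (W - M) * M by rewrite /Psi hWM.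
    have hxh : heavy (w t) x by rewrite heavyE.
    have hqh : heavy (w t) (q t) by apply: hheavy; exists x.
    have hWm : W <= 2 * m by rewrite -heavyE.
    have mEM : m = M.
      case: (eqVneq x (q t)) => [xq|xq]; first by rewrite /m /M xq.
      have : M <= Dq.
        rewrite /Dq (bigD1 x) //=.
        have : 0 <= \sum_(i | (i != q t) && (i != x)) w t i.
          by apply: sumr_ge0 => u _; apply: ltW.
        rewrite /M; lra.
      lra.
    rewrite hpsi -mEM.
    have -> : W - m = Dq by lra.
    have h4 : 4 * p * (1 - p) <= 1 by nra.
    case ha : (a t) => [u|] in W'E hw' *.
    + rewrite /compatible hqh in W'E hw'.
      have W'2 : wtot (w t.+1) = p * m + (1 - p) * Dq.
        rewrite W'E (bigD1 (q t)) //= eqxx /Dq mulr_sumr; congr (_ + _).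
        by apply: eq_bigr => v ->.
      have wq : w t.+1 (q t) = p * m by rewrite hw' /= eqxx.
      case: (boolP ((1 - p) * Dq <= p * m)) => hc.
      * have hz : wtot (w t.+1) <= 2 * w t.+1 (q t) by rewrite W'2 wq; lra.
        have := psi_G (hM' (q t)) hz; rewrite wq W'2.
        have : 0 <= (1 - 4 * p * (1 - p)) * (Dq * m) by apply: mulr_ge0; nra.
        nra.
      * have hc' : p * m < (1 - p) * Dq by rewrite ltNge.
        have := psi_H (wtot (w t.+1)) (w t.+1 y); rewrite W'2 => hH.
        have f1 : p ^+ 2 * m <= (1 - p) ^+ 2 * Dq by nra.
        have : 0 <= (m - Dq) * ((1 - p) ^+ 2 * Dq - p ^+ 2 * m).
          by apply: mulr_ge0; lra.
        nra.
    + rewrite /compatible in W'E hw'.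
      have W'2 : wtot (w t.+1) = (1 - p) * m + p * Dq.
        rewrite W'E (bigD1 (q t)) //= eqxx /Dq mulr_sumr; congr (_ + _).
        by apply: eq_bigr => v /negbTE ->.
      have wq : w t.+1 (q t) = (1 - p) * m by rewrite hw' /= eqxx.
      have hz : wtot (w t.+1) <= 2 * w t.+1 (q t) by rewrite W'2 wq; nra.
      have := psi_G (hM' (q t)) hz; rewrite wq W'2.
      have : 0 <= (1 - 4 * p * (1 - p)) * (Dq * m) by apply: mulr_ge0; nra.
      nra.
  - have hpsi : Psi W M = W ^+ 2 by rewrite /Psi (negbTE hWM).
    rewrite hpsi.
    have hqn : ~~ heavy (w t) (q t).
      have hWM' : 2 * M < W by rewrite ltNge.
      by rewrite heavyE; apply/negP => h; rewrite -/W -/m in h; lra.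
    set c := compatible e (w t) (q t) (a t) in W'E.
    set S := \sum_v (if c v then - w t v else w t v).
    have S0 : 0 <= S.
      case ha : (a t) => [u|].
      + have equ : e (q t) u by apply: hedge.
        have hm := hmed u.
        have : \sum_v (gdist e v u)%:R * w t v <=
               \sum_v ((gdist e v (q t))%:R * w t v) + S.
          rewrite /S -big_split /=; apply: ler_sum => v _.
          have wv := wpos t v.
          rewrite /c /compatible ha (negbTE hqn).
          case: eqP => hd.
          * have hd' : gdist e v (q t) = (gdist e v u).+1.
              by rewrite gdist_sym // hd gdist_sym.
            rewrite hd' -natr1; nra.
          * have hle : (gdist e v u)%:R <= (gdist e v (q t))%:R + 1 :> R.
              by rewrite natr1 ler_nat; exact: gdist_edge.
            nra.
        lra.
      + have : S = Dq - m.
          rewrite /S /c /compatible ha (bigD1 (q t)) //= eqxx.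
          have -> : \sum_(i | i != q t) (if i == q t then - w t i else w t i) = Dq.
            by apply: eq_bigr => v /negbTE ->.
          rewrite /m; lra.
        lra.
    have hW' : wtot (w t.+1) * 2 <= W.
      have : W - wtot (w t.+1) * 2 = (1 - 2 * p) * S.
        rewrite W'E /W /wtot /S mulr_sumr mulr_suml -sumrB; apply: eq_bigr => v _.
        case: (c v); lra.
      have : 0 <= (1 - 2 * p) * S by apply: mulr_ge0; lra.
      lra.
    have := psi_H (wtot (w t.+1)) (w t.+1 y).
    have := Wpos t.+1 y.
    nra.
move=> tau x hx.
have := inv tau x hx.
have := Wsplit tau x; have := Dge0 tau x; have := wpos tau x.
set D := \sum_(u | u != x) w tau u; set W := wtot (w tau); set M := w tau x.
move=> M0 D0 WE hI.
have P0 : 0 < (2 : R) ^+ tau by apply: exprn_gt0; lra.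
have hD : D ^+ 2 <= Psi W M.
  rewrite /Psi; case: ifP => h; nra.
rewrite ler_pdivlMr //.
nra.
Qed.
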